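(* Consider the three-gambler game $\Gamma_3(\mathbf{p},K)$ described in the context, and a stationary strategy profile $\mathbf{x}$ such that $\lim_{t\to\infty}\Pi^t(\mathbf{x})$ exists. Choose an arbitrary vector $\mathbf{U}_1^{(0)}\in\mathbb{R}^{N_K}$ and define $$\mathbf{U}_1^{(t+1)}=\widetilde{\Pi}_1(\mathbf{x})\mathbf{U}_1^{(t)}+\mathbf{b}_1,\qquad t=0,1,2,\dots$$ Then this iteration converges, and $\overline{\mathbf{U}}=\lim_{t\to\infty}\mathbf{U}_1^{(t)}$ is a solution of the payoff system $\mathbf{V}_1=\widetilde{\Pi}_1(\mathbf{x})\mathbf{V}_1+\mathbf{b}_1$.
   Context: The game $\Gamma_3(\mathbf{p},K)$ has three players $P_1,P_2,P_3$, parameters $\mathbf{p}=(p_1,p_2,p_3)\in(0,1)^3$ and an integer $K\ge3$. States. The state set is $S=\{(s_1,s_2,s_3)\in\mathbb{Z}_{\ge0}^3:s_1+s_2+s_3=K\}$, with $N_K=|S|=(K+1)(K+2)/2$. States are numbered so that the first three are $(K,0,0)$, $(0,K,0)$ and $(0,0,K)$; these terminal states are absorbing. Dynamics. In each round a player $P_n$ is selected equiprobably among those with positive capital. He selects another player $P_m$ with positive capital and wins one unit from $P_m$ with probability $p_{nm}$, otherwise pays one unit to $P_m$. Here $p_{12}=p_1$, $p_{21}=1-p_1$, $p_{23}=p_2$, $p_{32}=1-p_2$, $p_{31}=p_3$, $p_{13}=1-p_3$. Strategies. A stationary strategy profile $\mathbf{x}=(x_1(\mathbf{s}),x_2(\mathbf{s}),x_3(\mathbf{s}))_{\mathbf{s}\in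 S}$ gives, at each state: - the probability $x_1(\mathbf{s})$ that $P_1$ picks $P_2$ (else $P_3$); - the probability $x_2(\mathbf{s})$ that $P_2$ picks $P_3$ (else $P_1$); - the probability $x_3(\mathbf{s})$ that $P_3$ picks $P_1$ (else $P_2$). When two players remain, each picks the other. $\Pi(\mathbf{x})=(\pi_{i,j})$ is the transition matrix of the induced Markov chain on $S$. Matrices. $\widetilde{\Pi}_1(\mathbf{x})$ is the $N_K\times N_K$ matrix whose first three rows are zero and whose rows $4,\dots,N_K$ coincide with those of $\Pi(\mathbf{x})$. $\mathbf{b}_1=(1,0,0,\dots,0)^T\in\mathbb{R}^{N_K}$. *)

(* Defs.v *)
From HB Require Import structures.
From mathcomp Require Import all_boot all_order all_algebra.
From mathcomp Require Import all_classical all_reals all_analysis.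
Set Implicit Arguments. Unset Strict Implicit. Unset Printing Implicit Defensive.
Import Order.TTheory GRing.Theory Num.Theory.
Local Open Scope ring_scope.

(* Players P1,P2,P3 are the indices 0,1,2 : 'I_3. *)

(* States of Gamma_3(p,K): capitals (s_1,s_2,s_3) in N^3 with s_1+s_2+s_3 = K. *)
Definition state (K : nat) :=
  {s : {ffun 'I_3 -> 'I_K.+1} | (\sum_(i < 3) (s i : nat) == K)%N}.

Definition cap K (s : state K) (n : 'I_3) : nat := val s n.

Definition active K (s : state K) : {set 'I_3} := [set n | (0 < cap s n)%N].

Definition terminal K (s : state K) : bool := #|active s| == 1%N.

Definition nxt (n m : 'I_3) : bool := (m : nat) == (n.+1 %% 3)%N.

(* p_{nm}: p_{12}=p_1, p_{21}=1-p_1, p_{23}=p_2, p_{32}=1-p_2, p_{31}=p_3, p_{13}=1-p_3 *)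
Definition pw (R : nzRingType) (p : 'I_3 -> R) (n m : 'I_3) : R :=
  if nxt n m then p n else 1 - p m.

(* s' = s + e_n - e_m  (P_n wins one unit from P_m) *)
Definition move K (s : state K) (n m : 'I_3) (s' : state K) : bool :=
  [forall k, (cap s' k + (k == m) == cap s k + (k == n))%N].

(* probability that the selected player P_n picks P_m at state s.
   x n s is the probability that P_n picks his "next" player
   (x_1: P1 picks P2, x_2: P2 picks P3, x_3: P3 picks P1). With only two
   players left, each picks the other. *)
Definition pickp (R : nzRingType) K (x : 'I_3 -> state K -> R) (s : state K)
  (n m : 'I_3) : R :=
  if #|active s| == 2%N then 1 else if nxt n m then x n s else 1 - x n s.

Definition trans (R : fieldType) K (p : 'I_3 -> R) (x : 'I_3 -> state K -> R)
  (s s' : state K) : R :=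
  if (#|active s| <= 1)%N then (s == s')%:R else
  \sum_(n in active s) \sum_(m in active s | m != n)
     (#|active s|%:R)^-1 * pickp x s n m *
     (pw p n m * (move s n m s')%:R + (1 - pw p n m) * (move s m n s')%:R).

Definition NK K := #|{: state K}|.

Definition Pi (R : fieldType) K (p : 'I_3 -> R) (x : 'I_3 -> state K -> R)
  : 'M[R]_(NK K) :=
  \matrix_(i, j) trans p x (enum_val i) (enum_val j).

Definition Pit1 (R : fieldType) K (p : 'I_3 -> R) (x : 'I_3 -> state K -> R)
  : 'M[R]_(NK K) :=
  \matrix_(i, j) (if terminal (enum_val i) then 0 else Pi p x i j).

Definition b1 (R : nzRingType) K : 'cV[R]_(NK K) :=
  \col_i ((cap (enum_val i) ord0 == K)%:R).

Fixpoint iterU (R : nzRingType) N (A : 'M[R]_N) (b U0 : 'cV[R]_N) (t : nat)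
  : 'cV[R]_N :=
  match t with
  | 0 => U0
  | t'.+1 => A *m iterU A b U0 t' + b
  end.

(* Main.v *)
Require Import Defs.
From HB Require Import structures.
From mathcomp Require Import all_boot all_order all_algebra.
From mathcomp Require Import all_classical all_reals all_analysis.
From mathcomp Require Import lra zify.
From Stdlib Require Import Lia.
Import Order.TTheory GRing.Theory Num.Theory.
Import numFieldNormedType.Exports.
Local Open Scope classical_set_scope.
Local Open Scope ring_scope.

Section Gen.
Variables (R : realType) (N : nat) (A : 'M[R]_N).
Hypothesis A_ge0 : forall i j, 0 <= A i j.
Hypothesis A_row : forall i, \sum_j A i j <= 1.

Definition it (w : 'cV[R]_N) t := iterU A 0 w t.
Definition G t := it (const_mx 1) t.

Lemma itS (w : 'cV[R]_N) t : it w t.+1 = A *m it w t.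
Proof. by rewrite /it /= addr0. Qed.

Lemma it_add (w : 'cV[R]_N) t n : it w (t + n) = it (it w t) n.
Proof. elim: n => [|n IH]; first by rewrite addn0. by rewrite addnS !itS IH. Qed.

Lemma it_mono (w w' : 'cV[R]_N) t : (forall j, w j 0 <= w' j 0) -> forall i, it w t i 0 <= it w' t i 0.
Proof.
move=> H; elim: t => [|t IH] i; first exact: H.
rewrite !itS !mxE; apply: ler_sum => j _; exact: ler_wpM2l.
Qed.

Lemma itZ (c : R) (w : 'cV[R]_N) t : it (c *: w) t = c *: it w t.
Proof. elim: t => [|t IH] //; by rewrite !itS IH scalemxAr. Qed.

Lemma G_ge0 t i : 0 <= G t i 0.
Proof.
elim: t i => [|t IH] i; first by rewrite /G /it /= mxE.
rewrite /G itS mxE; apply: sumr_ge0 => j _; exact: mulr_ge0.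
Qed.

Lemma G_le1 t i : G t i 0 <= 1.
Proof.
elim: t i => [|t IH] i; first by rewrite /G /it /= mxE.
rewrite /G itS mxE; apply: le_trans (A_row i); apply: ler_sum => j _.
by rewrite -[leRHS]mulr1; apply: ler_wpM2l.
Qed.

Lemma it_bound (w : 'cV[R]_N) (c : R) t i : (forall j, `|w j 0| <= c) -> `|it w t i 0| <= c * G t i 0.
Proof.
move=> H; elim: t i => [|t IH] i; first by rewrite /G /it /= mxE mulr1.
rewrite /G !itS !mxE mulr_sumr; apply: le_trans (ler_norm_sum _ _ _) _.
apply: ler_sum => j _; rewrite normrM ger0_norm // mulrCA; exact: ler_wpM2l.
Qed.

Lemma G_dec t i : G t.+1 i 0 <= G t i 0.
Proof.
rewrite /G -[t.+1]add1n it_add; apply: it_mono => j.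
have := G_le1 1 j; rewrite /G /it /= !mxE. by [].
Qed.

Lemma G_decn s t i : (s <= t)%N -> G t i 0 <= G s i 0.
Proof.
move=> /subnK <-; elim: (t - s)%N => [|n IH] //=.
by rewrite addSn; apply: le_trans (G_dec _ _) IH.
Qed.

Lemma G_step c s n : (forall j, G s j 0 <= c) -> forall i, G (s + n) i 0 <= c * G n i 0.
Proof.
move=> H i; rewrite /G it_add.
apply: le_trans (@it_mono _ (c *: const_mx 1) _ _ _) _.
  by move=> j; rewrite !mxE mulr1.
by rewrite itZ mxE.
Qed.

Variables (phi : 'I_N -> nat) (M : nat).
Hypothesis phi_le : forall i, (phi i <= M)%N.
Hypothesis esc : forall i, (forall j, A i j = 0) \/ exists j, (phi i < phi j)%N /\ 0 < A i j.

Definition f i := if [forall j, A i j == 0] then 1 else \sum_(j | (phi i < phi j)%N) A i j.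

Lemma f_gt0 i : 0 < f i.
Proof.
rewrite /f; case: ifP => // /forallP Hn.
case: (esc i) => [Hz|[j [Hj Aj]]]; first by exfalso; apply/Hn => j; rewrite Hz.
rewrite (bigD1 j) //=; apply: (lt_le_trans Aj); rewrite lerDl.
by apply: sumr_ge0 => k _; exact: A_ge0.
Qed.

Lemma f_le1 i : f i <= 1.
Proof.
rewrite /f; case: ifP => // _; apply: le_trans (A_row i).
rewrite [leRHS](bigID (fun j => (phi i < phi j)%N)) /= lerDl.
by apply: sumr_ge0 => k _; exact: A_ge0.
Qed.

Definition a := \prod_i f i.

Lemma a_gt0 : 0 < a.
Proof. by apply: prodr_gt0 => i _; exact: f_gt0. Qed.

Lemma a_le i : a <= f i.
Proof.
rewrite /a (bigD1 i) //= -[leRHS]mulr1; apply: ler_wpM2l; first exact/ltW/f_gt0.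
apply: prodr_ile1 => j _; rewrite f_le1 andbT; exact/ltW/f_gt0.
Qed.

Lemma a_le1 : a <= 1.
Proof.
rewrite /a; apply: prodr_ile1 => j _; rewrite f_le1 andbT; exact/ltW/f_gt0.
Qed.

Lemma escQ t : forall i, (M <= phi i + t)%N -> a ^+ t <= 1 - G t.+1 i 0.
Proof.
elim: t => [|t IH] i Hi.
  rewrite expr0 /G itS mxE.
  case: (esc i) => [Hz|[j [Hj _]]]; last by have := phi_le j; rewrite addn0 in Hi; lia.
  by rewrite big1 ?subr0 // => j _; rewrite Hz mul0r.
have Hsum : \sum_j A i j * (1 - G t.+1 j 0) <= 1 - G t.+2 i 0.
  rewrite [G t.+2]/G itS mxE.
  have -> : \sum_j A i j * (1 - G t.+1 j 0) = \sum_j A i j - \sum_j A i j * it (const_mx 1) t.+1 j 0.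
    by rewrite -sumrB; apply: eq_bigr => j _; rewrite mulrBr mulr1.
  by have := A_row i; lra.
case: (esc i) => [Hz|[j0 [Hj0 Aj0]]].
  rewrite /G itS mxE big1 ?subr0; first by apply: exprn_ile1; [exact/ltW/a_gt0|exact: a_le1].
  by move=> j _; rewrite Hz mul0r.
have Hf : f i = \sum_(j | (phi i < phi j)%N) A i j.
  rewrite /f; case: ifP => // /forallP Hz.
  by move: (Hz j0) => /eqP E; rewrite E ltxx in Aj0.
have HM : (phi i < M)%N by have := phi_le j0; lia.
apply: le_trans Hsum.
apply: le_trans (_ : \sum_(j | (phi i < phi j)%N) A i j * (1 - G t.+1 j 0) <= _).
  rewrite exprS; apply: le_trans (ler_wpM2r _ (a_le i)) _.
    by apply: exprn_ge0; exact/ltW/a_gt0.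
  rewrite Hf mulr_suml; apply: ler_sum => j Hj; apply: ler_wpM2l => //.
  by apply: IH; lia.
rewrite [leRHS](bigID (fun j => (phi i < phi j)%N)) /= lerDl.
by apply: sumr_ge0 => k _; apply: mulr_ge0 => //; have := G_le1 t.+1 k; lra.
Qed.

Definition q := 1 - a ^+ M.

Lemma q_ge0 : 0 <= q.
Proof. rewrite /q subr_ge0; apply: exprn_ile1; [exact/ltW/a_gt0|exact: a_le1]. Qed.

Lemma q_lt1 : q < 1.
Proof. rewrite /q ltrBlDr ltrDl; apply: exprn_gt0; exact: a_gt0. Qed.

Lemma G_M i : G M.+1 i 0 <= q.
Proof. have := @escQ M i (leq_addl _ _); rewrite /q; lra. Qed.

Lemma G_kN k i : G (k * M.+1) i 0 <= q ^+ k.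
Proof.
elim: k i => [|k IH] i; first by rewrite mul0n expr0 G_le1.
rewrite mulSnr; apply: le_trans (@G_step _ _ _ IH i) _.
rewrite exprS mulrC; apply: ler_wpM2r; [apply: exprn_ge0; exact: q_ge0|exact: G_M].
Qed.

Lemma small_pow (c e : R) : 0 <= c -> 0 < e -> exists k, c * q ^+ k < e.
Proof.
move=> c0 e0.
have Hq : `|q| < 1 by rewrite ger0_norm ?q_lt1 ?q_ge0.
have := cvg_expr Hq; move/cvgrPdist_lt => /(_ (e / (c + 1))).
have ec : 0 < e / (c + 1) by apply: divr_gt0 => //; lra.
move=> /(_ ec) [k _ Hk]; exists k.
have := Hk k (leqnn k); rewrite /= sub0r normrN ger0_norm; last by apply: exprn_ge0; exact: q_ge0.
rewrite ltr_pdivlMr; last by lra.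
have : 0 <= q ^+ k by apply: exprn_ge0; exact: q_ge0.
nra.
Qed.

Lemma it_small (w : 'cV[R]_N) i (e : R) : 0 < e -> exists T, forall t, (T <= t)%N -> `|it w t i 0| < e.
Proof.
move=> e0; pose c : R := \sum_j `|w j 0|.
have c0 : 0 <= c by apply: sumr_ge0.
have cb : forall j, `|w j 0| <= c.
  by move=> j; rewrite /c (bigD1 j) //= lerDl; apply: sumr_ge0.
have [k Hk] := small_pow _ _ c0 e0.
exists (k * M.+1)%N => t Ht.
apply: le_lt_trans (@it_bound w c t i cb) _.
apply: le_lt_trans Hk; apply: ler_wpM2l => //.
exact: le_trans (@G_decn _ _ i Ht) (G_kN _ _).
Qed.

Lemma unit_IA : (1%:M - A) \in unitmx.
Proof.
rewrite unitmxE unitfE -det_tr; apply/negP => /det0P [v vn0 Hv].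
have Hw : (1%:M - A) *m v^T = 0 by rewrite -[_ *m _]trmxK trmx_mul trmxK Hv trmx0.
have Hfix : A *m v^T = v^T by move: Hw; rewrite mulmxBl mul1mx => /eqP; rewrite subr_eq0 => /eqP <-.
have Hit : forall t, it v^T t = v^T by elim=> [|t IH] //; rewrite itS IH.
move/eqP: vn0; apply; apply/matrixP => z j; rewrite (ord1 z) mxE.
apply/eqP; rewrite -normr_eq0; apply/negP => /negP Hne.
have e0 : 0 < `|v 0 j| by rewrite lt_def Hne normr_ge0.
have [T HT] := @it_small (v^T) j _ e0.
by have := HT T (leqnn T); rewrite Hit mxE ltxx.
Qed.

Lemma gen_main (b U0 : 'cV[R]_N) : exists Ubar : 'cV[R]_N,
    (forall i, (fun t : nat => iterU A b U0 t i 0) @ \oo --> Ubar i 0) /\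
    Ubar = A *m Ubar + b.
Proof.
set Ubar := invmx (1%:M - A) *m b.
have Hfix : Ubar = A *m Ubar + b.
  have : (1%:M - A) *m Ubar = b by rewrite /Ubar mulmxA mulmxV ?mul1mx // unit_IA.
  by rewrite mulmxBl mul1mx => <-; rewrite addrC subrK.
exists Ubar; split => // i.
have Hd : forall t, iterU A b U0 t - Ubar = it (U0 - Ubar) t.
  elim=> [|t IH] //; rewrite itS -IH /= {1}Hfix mulmxBr.
  by rewrite opprD addrACA subrr addr0.
apply/cvgrPdist_lt => e e0.
have [T HT] := @it_small (U0 - Ubar) i _ e0.
exists T => // t /= Ht.
have := HT t Ht; rewrite -Hd !mxE distrC.
by [].
Qed.
End Gen.

Section Game.
Variables (R : realType) (K : nat) (p : 'I_3 -> R) (x : 'I_3 -> state K -> R).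
Hypothesis HK : (3 <= K)%N.
Hypothesis Hp : forall n, 0 < p n < 1.
Hypothesis Hx : forall n s, 0 <= x n s <= 1.

Lemma pw_gt0 n m : 0 < pw p n m.
Proof. rewrite /pw; case: ifP => _; have := Hp n; have := Hp m; lra. Qed.
Lemma pw_lt1 n m : pw p n m < 1.
Proof. rewrite /pw; case: ifP => _; have := Hp n; have := Hp m; lra. Qed.

Lemma pickp_ge0 s n m : 0 <= pickp x s n m.
Proof. rewrite /pickp; case: ifP => _ //; case: ifP => _; have := Hx n s; lra. Qed.

Lemma trans_ge0 s s' : 0 <= trans p x s s'.
Proof.
rewrite /Defs.trans; case: ifP => _; first exact: ler0n.
apply: sumr_ge0 => n _; apply: sumr_ge0 => m _.
apply: mulr_ge0; first apply: mulr_ge0; [by rewrite invr_ge0 ler0n|exact: pickp_ge0|].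
have := pw_gt0 n m; have := pw_lt1 n m.
have := ler0n R (move s n m s'); have := ler0n R (move s m n s').
nra.
Qed.

Lemma capK (s : state K) : (\sum_(k < 3) cap s k)%N = K.
Proof. exact: eqP (valP s). Qed.

Lemma move_uniq (s : state K) n m s1 s2 : move s n m s1 -> move s n m s2 -> s1 = s2.
Proof.
move=> /forallP H1 /forallP H2; apply: val_inj; apply/ffunP => k; apply: ord_inj.
have := H1 k; have := H2 k; rewrite /cap => /eqP E2 /eqP E1.
move: E1 E2; case: (k == m); case: (k == n) => /=; lia.
Qed.

Lemma sum_move_le1 (s : state K) n m : \sum_(s' : state K) ((move s n m s')%:R : R) <= 1.
Proof.
case: (pickP (move s n m)) => [s1 Hs1|Hn].
  rewrite (bigD1 s1) //= Hs1 big1 ?addr0 // => s' Hs'.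
  case Hm: (move s n m s') => //; by rewrite (@move_uniq s n m _ _ Hs1 Hm) eqxx in Hs'.
by rewrite big1 ?ler01 // => s' _; rewrite Hn.
Qed.

Lemma card_act_le3 (s : state K) : (#|active s| <= 3)%N.
Proof. by have := max_card (mem (active s)); rewrite card_ord. Qed.

Lemma sum_pick (s : state K) n : n \in active s -> (2 <= #|active s|)%N ->
  \sum_(m in active s | m != n) pickp x s n m = 1.
Proof.
move=> Hn H2; have := card_act_le3 s.
case E: #|active s| => [|[|[|[|//]]]] //; rewrite E in H2 => // _.
- rewrite (eq_bigl (fun m => m \in active s :\ n)); last first.
    by move=> m; rewrite in_setD1 andbC.
  rewrite (eq_bigr (fun=> 1)); last by move=> m _; rewrite /pickp E.
  rewrite sumr_const; have := cardsD1 n (active s); rewrite Hn E => H.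
  by rewrite (_ : #|active s :\ n| = 1%N) //; lia.
- have Ha : active s = (finset.setT : {set 'I_3}) by apply/eqP; rewrite eqEcard finset.subsetT finset.cardsT card_ord E.
  rewrite (eq_bigl (fun m => m != n)); last by move=> m; rewrite Ha finset.in_setT.
  rewrite (eq_bigr (fun m => if nxt n m then x n s else 1 - x n s)); last first.
    by move=> m _; rewrite /pickp E.
  rewrite /nxt; case: n {Hn} => [[|[|[|//]]] Hn]; rewrite big_mkcond !big_ord_recl big_ord0 /=; lra.
Qed.

Lemma trans_row (s : state K) : \sum_(s' : state K) trans p x s s' <= 1.
Proof.
have [Hc|Hc] := boolP (#|active s| <= 1)%N; rewrite /Defs.trans ?Hc ?(negbTE Hc).
  rewrite (bigD1 s) //= eqxx big1 ?addr0 // => s' Hs'.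
  by rewrite eq_sym (negbTE Hs').
set c := (#|active s|%:R : R)^-1.
rewrite exchange_big /=.
under eq_bigr => n _ do rewrite exchange_big /=.
apply: le_trans (_ : _ <= \sum_(n in active s) \sum_(m in active s | m != n) c * pickp x s n m) _.
  apply: ler_sum => n _; apply: ler_sum => m _.
  rewrite -mulr_sumr big_split /= -!mulr_sumr.
  have := sum_move_le1 s n m; have := sum_move_le1 s m n.
  have : 0 <= \sum_(s' : state K) ((move s n m s')%:R : R) by apply: sumr_ge0 => *; exact: ler0n.
  have : 0 <= \sum_(s' : state K) ((move s m n s')%:R : R) by apply: sumr_ge0 => *; exact: ler0n.
  have := pw_gt0 n m; have := pw_lt1 n m.
  have : 0 <= c * pickp x s n m by apply: mulr_ge0; [rewrite invr_ge0 ler0n|exact: pickp_ge0].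
  set P := c * pickp x s n m.
  move=> P0 pw1 pw0 B2' B1' B2l B1l.
  rewrite -[leRHS]mulr1; apply: ler_wpM2l => //.
  have h1 : 0 <= pw p n m * (1 - \sum_s' ((move s n m s')%:R : R)).
    by apply: mulr_ge0; rewrite ?subr_ge0 // ltW.
  have h2 : 0 <= (1 - pw p n m) * (1 - \sum_s' ((move s m n s')%:R : R)).
    by apply: mulr_ge0; rewrite subr_ge0 // ltW.
  move: h1 h2; rewrite !mulrBr !mulr1; lra.
have H2 : (2 <= #|active s|)%N by rewrite ltnNge.
rewrite (eq_bigr (fun=> c)); last first.
  by move=> n Hn; rewrite -mulr_sumr sum_pick ?mulr1.
rewrite sumr_const -mulr_natr /c mulVf //.
by rewrite pnatr_eq0 -lt0n; lia.
Qed.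

Definition term (s s' : state K) n m : R :=
  (#|active s|%:R)^-1 * pickp x s n m *
     (pw p n m * (move s n m s')%:R + (1 - pw p n m) * (move s m n s')%:R).

Lemma term_ge0 s s' n m : 0 <= term s s' n m.
Proof.
apply: mulr_ge0; first apply: mulr_ge0; [by rewrite invr_ge0 ler0n|exact: pickp_ge0|].
have := pw_gt0 n m; have := pw_lt1 n m.
have := ler0n R (move s n m s'); have := ler0n R (move s m n s').
nra.
Qed.

Lemma trans_ge_term (s s' : state K) n m : ~~ (#|active s| <= 1)%N -> n \in active s ->
  m \in active s -> m != n -> term s s' n m <= trans p x s s'.
Proof.
move=> Hc Hn Hm Hmn.
rewrite /Defs.trans (negbTE Hc) (bigD1 n) //= (bigD1 m) /=; last by rewrite Hm Hmn.
rewrite -addrA lerDl; apply: addr_ge0; apply: sumr_ge0 => *; last apply: sumr_ge0 => *;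
  exact: term_ge0.
Qed.

Definition phis (s : state K) : nat := (\sum_(k < 3) cap s k * cap s k)%N.

Lemma cap_le (s : state K) k : (cap s k <= K)%N.
Proof. by rewrite /cap -ltnS ltn_ord. Qed.

Lemma phis_le s : (phis s <= \sum_(k < 3) K * K)%N.
Proof. by apply: leq_sum => k _; apply: leq_mul; apply: cap_le. Qed.

Lemma act_ne0 (s : state K) : #|active s| != 0%N.
Proof.
apply/negP => /eqP /cards0_eq H.
have : forall k, cap s k = 0%N.
  move=> k; have : k \notin active s by rewrite H inE.
  by rewrite inE -eqn0Ngt => /eqP.
move=> Hz; have := capK s; rewrite big1 //; lia.
Qed.

Lemma split3 (g : 'I_3 -> nat) w l : w != l ->
  (\sum_(k < 3) g k = g w + g l + \sum_(k < 3 | (k != w) && (k != l)) g k)%N.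
Proof.
move=> wl; rewrite (bigD1 w) //= (bigD1 l) /=; last by rewrite eq_sym wl.
by rewrite addnA.
Qed.

Lemma exists_move (s : state K) w l : w != l -> (0 < cap s l)%N -> (cap s l <= cap s w)%N ->
  exists s', move s w l s' && (phis s < phis s')%N.
Proof.
move=> wl l0 lw.
have wl' : (w == l) = false by exact: negbTE.
have lw' : (l == w) = false by rewrite eq_sym; exact: negbTE.
have Hwl : (cap s w + cap s l <= K)%N.
  rewrite -{3}(capK s) (@split3 _ w l wl); lia.
pose f := [ffun k : 'I_3 => (inord (cap s k + (k == w) - (k == l)) : 'I_K.+1)].
have Hf : forall k, (f k : nat) = (cap s k + (k == w) - (k == l))%N.
  move=> k; rewrite ffunE inordK //.
  have := cap_le s k.
  case: (eqVneq k w) => [->|kw] /=; first by rewrite (negbTE wl); lia.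
  by case: (k == l) => /=; lia.
have Hsum : (\sum_(i < 3) (f i : nat) == K)%N.
  rewrite (@split3 _ w l wl) !Hf !eqxx wl' lw' /=.
  rewrite (eq_bigr (fun k => cap s k)); last first.
    by move=> k /andP [/negbTE kw /negbTE kl]; rewrite Hf kw kl; lia.
  have := capK s; rewrite (@split3 _ w l wl) => HH; apply/eqP; rewrite -[in RHS]HH; congr (_ + _)%N; lia.
pose s' := (insubd s f : state K).
have Hcap : forall k, cap s' k = (cap s k + (k == w) - (k == l))%N.
  by move=> k; rewrite /cap /s' insubdK //; rewrite -Hf.
exists s'; apply/andP; split.
  apply/forallP => k; rewrite Hcap.
  case: (eqVneq k w) => [->|kw]; first by rewrite (negbTE wl) /=; apply/eqP; lia.
  case: (eqVneq k l) => [->|kl] /=; apply/eqP; lia.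
rewrite /phis !(@split3 _ w l wl) !Hcap !eqxx wl' lw' /=.
rewrite [X in (_ < _ + X)%N](eq_bigr (fun k => cap s k * cap s k)%N); last first.
  by move=> k /andP [/negbTE kw /negbTE kl]; rewrite Hcap kw kl; lia.
nia.
Qed.

Definition phi (i : 'I_(NK K)) := phis (enum_val i).

Lemma Pit_ge0 i j : 0 <= Pit1 p x i j.
Proof. rewrite mxE; case: ifP => _ //; rewrite mxE; exact: trans_ge0. Qed.

Lemma Pit_row i : \sum_j Pit1 p x i j <= 1.
Proof.
case Ht: (terminal (enum_val i)).
  by rewrite big1 ?ler01 // => j _; rewrite mxE Ht.
rewrite (eq_bigr (fun j => trans p x (enum_val i) (enum_val j))); last first.
  by move=> j _; rewrite !mxE Ht.
have := trans_row (enum_val i); rewrite big_enum_val; by [].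
Qed.

Lemma Pit_esc i : (forall j, Pit1 p x i j = 0) \/
  exists j, (phi i < phi j)%N /\ 0 < Pit1 p x i j.
Proof.
case Ht: (terminal (enum_val i)); [left=> j; by rewrite mxE Ht | right].
set s := enum_val i in Ht *.
have Hc : ~~ (#|active s| <= 1)%N.
  have := act_ne0 s; move: Ht; rewrite /terminal; case: #|active s| => [|[|]] //.
have [n Hn] : exists n, n \in active s.
  by apply/set0Pn; rewrite -card_gt0 lt0n act_ne0.
have [m /and3P [Hm Hmn Hpk]] : exists m, [&& m \in active s, m != n & 0 < pickp x s n m].
  apply/existsP; apply: contraT => /existsPn Hno.
  have := @sum_pick s n Hn; rewrite ltnNge Hc => /(_ isT).
  rewrite big1; first by move/eqP; rewrite eq_sym oner_eq0.
  move=> m /andP [Hm Hmn]; apply/eqP; rewrite eq_le pickp_ge0 andbT leNgt.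
  by have := Hno m; rewrite Hm Hmn.
have c0 : 0 < (#|active s|%:R : R)^-1 by rewrite invr_gt0 ltr0n lt0n act_ne0.
have Hmc : (0 < cap s m)%N by move: Hm; rewrite inE.
have Hnc : (0 < cap s n)%N by move: Hn; rewrite inE.
have nm : n != m by rewrite eq_sym.
case: (leqP (cap s m) (cap s n)) => Hle.
  have [s' /andP [Hmv Hph]] := @exists_move s n m nm Hmc Hle.
  exists (enum_rank s'); rewrite /phi enum_rankK; split => //.
  rewrite !mxE Ht enum_rankK; apply: lt_le_trans (@trans_ge_term s s' n m Hc Hn Hm Hmn).
  rewrite /term Hmv /= ?mulr1n ?mulr1; apply: mulr_gt0; first exact: mulr_gt0.
  have := pw_gt0 n m; have := pw_lt1 n m; have := ler0n R (move s m n s'); nra.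
have [s' /andP [Hmv Hph]] := @exists_move s m n Hmn Hnc (ltnW Hle).
exists (enum_rank s'); rewrite /phi enum_rankK; split => //.
rewrite !mxE Ht enum_rankK; apply: lt_le_trans (@trans_ge_term s s' n m Hc Hn Hm Hmn).
rewrite /term Hmv /= ?mulr1n ?mulr1; apply: mulr_gt0; first exact: mulr_gt0.
have := pw_gt0 n m; have := pw_lt1 n m; have := ler0n R (move s n m s'); nra.
Qed.
End Game.

Theorem proposition4 (R : realType) (K : nat) (p : 'I_3 -> R)
  (x : 'I_3 -> state K -> R) (U0 : 'cV[R]_(NK K)) :
  (3 <= K)%N ->
  (forall n, 0 < p n < 1) ->
  (forall n s, 0 <= x n s <= 1) ->
  (exists L : 'M[R]_(NK K),
      forall i j, (fun t : nat => (Pi p x ^+ t) i j) @ \oo --> L i j) ->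
  exists Ubar : 'cV[R]_(NK K),
    (forall i, (fun t : nat => iterU (Pit1 p x) (b1 R K) U0 t i 0) @ \oo
                 --> Ubar i 0) /\
    Ubar = Pit1 p x *m Ubar + b1 R K.
Proof.
move=> HK Hp Hx _.
have :=  (@gen_main R (NK K) (Pit1 p x) (@Pit_ge0 R K p x Hp Hx) (@Pit_row R K p x HK Hp Hx)
  (@phi K) (\sum_(k < 3) K * K)%N (fun i => @phis_le K (enum_val i))
  (@Pit_esc R K p x HK Hp Hx) (b1 R K) U0).
by [].
Qed.
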